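(* Consider the Generalized Stochastic Blockmodel with $p>q$ in which all true clusters have size exactly $K$, every in-cluster pair has edge probability exactly $p$ and every other pair (different clusters or involving an outlier) has edge probability exactly $q$, and where $K=\Theta(n)$ and $n_2=\Theta(n_1)$. Then there is an absolute constant $c_2>0$ such that for all sufficiently large $n$: if some algorithm (a measurable function of the adjacency matrix $A$) recovers the true clusters correctly with probability at least $\tfrac34$ (for every possible true clustering), then $$\frac{p-q}{\sqrt{p(1-q)}}\ \ge\ \frac{c_2}{\sqrt{n}}.$$
   Context: Generalized Stochastic Blockmodel: there are $n=n_1+n_2$ nodes, split into a set $V_1$ of $n_1$ nodes and a set $V_2$ of $n_2$ outlier nodes; $V_1$ is partitioned into $r$ disjoint true clusters. Edges between distinct pairs are drawn independently, with probability $p$ for pairs in the same true cluster and probability $q$ for pairs in different clusters or with at least one node in $V_2$. $A$ is the symmetric $0/1$ adjacency matrix. The recovery task is to output the true clusters given $A$. *)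

(* Defs.v *)
From HB Require Import structures.
From mathcomp Require Import all_boot all_order all_algebra.
Set Implicit Arguments. Unset Strict Implicit. Unset Printing Implicit Defensive.
Import Order.TTheory GRing.Theory Num.Theory.
Local Open Scope ring_scope.

(* A labelling of the n nodes: [Some k] = node in true cluster k,
   [None] = outlier (node of V2). *)
Definition cluster (n r : nat) (sigma : {ffun 'I_n -> option 'I_r}) (k : 'I_r)
  : {set 'I_n} := [set i | sigma i == Some k].

Definition true_clusters (n r : nat) (sigma : {ffun 'I_n -> option 'I_r})
  : {set {set 'I_n}} := [set cluster sigma k | k : 'I_r].

Definition gsbm_config (n r K n2 : nat) (sigma : {ffun 'I_n -> option 'I_r}) : Prop :=
  (forall k : 'I_r, #|cluster sigma k| = K) /\ #|[set i | sigma i == None]| = n2.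

Definition edge_prob (R : numDomainType) (n r : nat)
  (sigma : {ffun 'I_n -> option 'I_r}) (p q : R) (i j : 'I_n) : R :=
  if (sigma i != None) && (sigma i == sigma j) then p else q.

Definition is_adj (n : nat) (A : 'M[bool]_n) : bool :=
  [forall i, ~~ A i i] && [forall i, forall j, A i j == A j i].

Definition gsbm_prob (R : numDomainType) (n r : nat)
  (sigma : {ffun 'I_n -> option 'I_r}) (p q : R) (A : 'M[bool]_n) : R :=
  if is_adj A then
    \prod_(i : 'I_n) \prod_(j : 'I_n | (i < j)%N)
      (if A i j then edge_prob sigma p q i j else 1 - edge_prob sigma p q i j)
  else 0.

Definition success_prob (R : numDomainType) (n r : nat)
  (sigma : {ffun 'I_n -> option 'I_r}) (p q : R)
  (f : 'M[bool]_n -> {set {set 'I_n}}) : R :=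
  \sum_(A : 'M[bool]_n | f A == true_clusters sigma) gsbm_prob sigma p q A.

(* Main.v *)
Require Import Defs.
From HB Require Import structures.
From mathcomp Require Import all_boot all_order all_algebra.
From mathcomp Require Import zify ring lra.
Import Order.TTheory GRing.Theory Num.Theory.
Set Implicit Arguments. Unset Strict Implicit. Unset Printing Implicit Defensive.

Lemma card_block n K k : (0 < K)%N -> (k * K + K <= n)%N ->
  #|[set i : 'I_n | i %/ K == k]| = K.
Proof.
move=> K0 hn.
have H : forall j : 'I_K, (k * K + j < n)%N by move=> j; have := ltn_ord j; lia.
have -> : [set i : 'I_n | i %/ K == k] = [set Ordinal (H j) | j : 'I_K].
  apply/setP => i; rewrite inE; apply/idP/imsetP.
  - move=> /eqP hi.
    have h1 : (k * K <= i)%N by rewrite -hi leq_divM.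
    have hj : (i - k * K < K)%N by nia.
    exists (Ordinal hj) => //; apply: val_inj => /=; lia.
  - move=> [j _ ->] /=; apply/eqP; by rewrite divnMDl // divn_small ?addn0.
rewrite card_imset ?card_ord // => j1 j2 /(congr1 val) /= h; apply: val_inj.
exact: addnI h.
Qed.

Lemma card_tail n r K n2 : (0 < K)%N -> n = (r * K + n2)%N ->
  #|[set i : 'I_n | (r <= i %/ K)%N]| = n2.
Proof.
move=> K0 hn.
have H : forall j : 'I_n2, (r * K + j < n)%N by move=> j; have := ltn_ord j; lia.
have -> : [set i : 'I_n | (r <= i %/ K)%N] = [set Ordinal (H j) | j : 'I_n2].
  apply/setP => i; rewrite inE; apply/idP/imsetP.
  - move=> hi.
    have h1 : (r * K <= i)%N by apply: leq_trans (leq_divM i K); rewrite leq_mul2r hi orbT.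
    have hj : (i - r * K < n2)%N by have := ltn_ord i; lia.
    exists (Ordinal hj) => //; apply: val_inj => /=; lia.
  - move=> [j _ ->] /=; by rewrite divnMDl // leq_addr.
rewrite card_imset ?card_ord // => j1 j2 /(congr1 val) /= h; apply: val_inj; exact: addnI h.
Qed.

Lemma insub_some r (x : nat) (k : 'I_r) : (insub x == Some k) = (x == k).
Proof.
case: insubP => [w _ <-|hn] /=; first by [].
apply/esym/negbTE; apply/negP => /eqP hx; move: hn; rewrite hx ltn_ord.
by [].
Qed.

Lemma insub_none r (x : nat) : (insub x == None :> option 'I_r) = (r <= x)%N.
Proof. by case: insubP => [w hw _|hn] /=; rewrite leqNgt ?hw // hn. Qed.

Lemma exists_pair n r K n2 : (0 < K)%N -> (0 < r)%N -> (0 < n2)%N -> n = (r * K + n2)%N ->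
  exists (sigma sigma' : {ffun 'I_n -> option 'I_r}) (u v : 'I_n),
   [/\ gsbm_config K n2 sigma, gsbm_config K n2 sigma',
       true_clusters sigma != true_clusters sigma' &
       forall i, i != u -> i != v -> sigma' i = sigma i].
Proof.
move=> K0 r0 n20 hn.
pose sigma := [ffun i : 'I_n => (insub (i %/ K) : option 'I_r)].
have hu : (0 < n)%N by lia.
have hv : (r * K < n)%N by lia.
pose u : 'I_n := Ordinal hu.
pose v : 'I_n := Ordinal hv.
pose sw (i : 'I_n) := if i == u then v else if i == v then u else i.
have swK : involutive sw.
  move=> i; rewrite /sw; case: (eqVneq i u) => [->|iu]; first by rewrite eqxx;
    case: (eqVneq v u) => [->|]; rewrite ?eqxx.
  case: (eqVneq i v) => [->|iv]; first by rewrite eqxx.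
  by rewrite (negbTE iu) (negbTE iv).
have swi : injective sw := inv_inj swK.
pose sigma' := [ffun i => sigma (sw i)].
have cl : forall k : 'I_r, cluster sigma k = [set i : 'I_n | i %/ K == k].
  by move=> k; apply/setP => i; rewrite !inE ffunE insub_some.
have out : [set i | sigma i == None] = [set i : 'I_n | (r <= i %/ K)%N].
  by apply/setP => i; rewrite !inE ffunE insub_none.
have c1 : gsbm_config K n2 sigma.
  split; last by rewrite out (card_tail K0 hn).
  move=> k; rewrite cl card_block //; have := ltn_ord k; nia.
exists sigma, sigma', u, v; split => //.
- case: c1 => c1a c1b; split.
    move=> k; have -> : cluster sigma' k = sw @^-1: cluster sigma k.
      by apply/setP => i; rewrite !inE ffunE.
    by rewrite card_preimset.
  have -> : [set i | sigma' i == None] = sw @^-1: [set i | sigma i == None].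
    by apply/setP => i; rewrite !inE ffunE.
  by rewrite card_preimset.
- have su : sigma u = Some (Ordinal r0) by rewrite ffunE; apply/eqP; rewrite insub_some /= div0n.
  apply/eqP => eTC.
  have : cluster sigma (Ordinal r0) \in true_clusters sigma' by rewrite -eTC; apply: imset_f.
  case/imsetP => k _ ek.
  have : u \in cluster sigma (Ordinal r0) by rewrite inE su.
  rewrite ek inE ffunE /sw eqxx ffunE insub_some /= mulnK // => /eqP hk.
  by have := ltn_ord k; rewrite -hk ltnn.
- move=> i iu iv; rewrite ffunE /sw (negbTE iu) (negbTE iv) //.
Qed.

Local Open Scope ring_scope.

Definition upper n (A : 'M[bool]_n) : 'M[bool]_n := \matrix_(i,j) ((i < j)%N && A i j).
Definition symm n (U : 'M[bool]_n) : 'M[bool]_n :=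
  \matrix_(i,j) if (i<j)%N then U i j else if (j<i)%N then U j i else false.
Definition su n (U : 'M[bool]_n) : bool := [forall i, forall j, (U i j) ==> (i < j)%N].

Lemma su_upper n (A : 'M[bool]_n) : su (upper A).
Proof. by apply/forallP=> i; apply/forallP=> j; rewrite !mxE; apply/implyP => /andP[]. Qed.

Lemma sum_adj (R : rcfType) n (h : 'I_n -> 'I_n -> bool -> R) :
  \sum_(A : 'M[bool]_n) (if is_adj A then \prod_(i : 'I_n) \prod_(j : 'I_n | (i < j)%N) h i j (A i j) else 0)
  = \prod_(i : 'I_n) \prod_(j : 'I_n | (i < j)%N) (h i j true + h i j false).
Proof.
rewrite -big_mkcond /=.
rewrite (reindex_onto (@symm n) (@upper n)); last first.
  move=> A /andP[/forallP dA /forallP sA]; apply/matrixP=> i j; rewrite !mxE.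
  case: (ltngtP i j) => [ij|ji|ij] /=; rewrite ?mxE ?ij ?ji /=.
  - by [].
  - exact: (eqP (forallP (sA j) i)).
  - have eij : i = j by apply: val_inj.
    by subst j; rewrite (negbTE (dA i)).
pose F (x : 'I_n * 'I_n) (b : bool) : R :=
  if (x.1 < x.2)%N then h x.1 x.2 b else if b then 0 else 1.
transitivity (\sum_(U : 'M[bool]_n) \prod_(x : 'I_n * 'I_n) F x (U x.1 x.2)).
  rewrite [RHS](bigID (@su n)) /= [X in _ + X]big1 ?addr0; last first.
    move=> U /forallPn[i /forallPn[j]]; rewrite negb_imply => /andP[Uij nij].
    by rewrite (bigD1 (i, j)) //= /F /= (negbTE nij) Uij mul0r.
  apply: eq_big => U.
    apply/idP/idP => [/andP[_ /eqP <-]|suU]; first exact: su_upper.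
    apply/andP; split.
      apply/andP; split; apply/forallP=> i; first by rewrite !mxE ltnn.
      apply/forallP=> j; rewrite !mxE; case: (ltngtP i j) => //.
    apply/eqP/matrixP=> i j; rewrite !mxE.
    case: (ltnP i j) => ij /=; first by [].
    apply/esym; apply: negbTE; apply/negP => Uij.
    by move: (implyP (forallP (forallP suU i) j) Uij); rewrite ltnNge ij.
  move=> /andP[_ /eqP eU].
  have suU : su U by rewrite -eU su_upper.
  rewrite (bigID (fun x : 'I_n * 'I_n => (x.1 < x.2)%N)) /= [X in _ * X]big1 ?mulr1; last first.
    move=> [i j] /= nij; rewrite /F /= (negbTE nij).
    case Uij: (U i j) => //.
    by move: (implyP (forallP (forallP suU i) j) Uij); rewrite (negbTE nij).
  rewrite pair_big_dep /=; apply: eq_bigr => [[i j]] /= ij.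
  by rewrite /F /= ij !mxE ij.
transitivity (\sum_(f : {ffun 'I_n * 'I_n -> bool}) \prod_(x : 'I_n * 'I_n) F x (f x)).
  rewrite (reindex (@Matrix bool n n)) /=; last first.
    by exists (@mx_val bool n n) => // [[f]].
  by apply: eq_bigr => f _; apply: eq_bigr => [[i j]] _.
rewrite -bigA_distr_bigA /= pair_big_dep /= [RHS]big_mkcond /=.
apply: eq_bigr => [[i j]] _ /=; rewrite big_bool /F /=.
by case: (i < j)%N; rewrite /= ?add0r.
Qed.

Lemma sum_cond (R : rcfType) (T : finType) (E : pred T) (F : T -> R) :
  \sum_(t | E t) F t = \sum_t (E t)%:R * F t.
Proof. by rewrite big_mkcond; apply: eq_bigr => t _; case: (E t); rewrite ?mul1r ?mul0r. Qed.

Lemma abstract_ineq (R : rcfType) (T : finType) (x y : T -> R) (E E' : pred T) :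
  \sum_t x t ^+ 2 = 1 -> \sum_t y t ^+ 2 = 1 ->
  (forall t, E t -> E' t -> False) ->
  3%:R / 4%:R <= \sum_(t | E t) x t ^+ 2 -> 3%:R / 4%:R <= \sum_(t | E' t) y t ^+ 2 ->
  15%:R * \sum_t x t * y t <= 13%:R.
Proof.
move=> sx sy dis hE hE'.
have pt : forall t, (E t)%:R * x t ^+ 2 + (E' t)%:R * y t ^+ 2 <=
   (25%:R / 16%:R) * x t ^+ 2 + (25%:R / 16%:R) * y t ^+ 2 - (15%:R / 8%:R) * (x t * y t).
  move=> t; case Et: (E t); case E't: (E' t); first by case: (dis t).
  - have h0 : 0 <= (x t - y t - (x t + y t) / 4%:R) ^+ 2 by apply: sqr_ge0.
    rewrite mul1r mul0r addr0; nra.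
  - have h0 : 0 <= (y t - x t - (x t + y t) / 4%:R) ^+ 2 by apply: sqr_ge0.
    rewrite mul1r mul0r add0r; nra.
  - have h0 : 0 <= (x t - y t) ^+ 2 by apply: sqr_ge0.
    rewrite !mul0r addr0; nra.
have := ler_sum (index_enum T) (fun t _ => pt t).
move=> /(_ xpredT).
rewrite big_split /= -!sum_cond /= sumrB big_split /= -!mulr_sumr sx sy.
lra.
Qed.

Lemma edge_ineq (R : rcfType) (p q : R) : 0 <= q -> q < p -> p <= 1 ->
  (1 - (Num.sqrt p * Num.sqrt q + Num.sqrt (1 - p) * Num.sqrt (1 - q))) * (p * (1 - q))
   <= (p - q) ^+ 2.
Proof.
move=> q0 qp p1.
set s := Num.sqrt p; set t := Num.sqrt q; set a := Num.sqrt (1 - p); set b := Num.sqrt (1 - q).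
have s0 : 0 <= s by apply: sqrtr_ge0.
have t0 : 0 <= t by apply: sqrtr_ge0.
have a0 : 0 <= a by apply: sqrtr_ge0.
have b0 : 0 <= b by apply: sqrtr_ge0.
have ss : s ^+ 2 = p by rewrite sqr_sqrtr //; lra.
have tt : t ^+ 2 = q by rewrite sqr_sqrtr //; lra.
have aa : a ^+ 2 = 1 - p by rewrite sqr_sqrtr //; lra.
have bb : b ^+ 2 = 1 - q by rewrite sqr_sqrtr //; lra.
have e1 : 1 - (s * t + a * b) = ((s - t) ^+ 2 + (b - a) ^+ 2) / 2%:R.
  rewrite !sqrrB ss tt aa bb; lra.
have h1 : (s - t) ^+ 2 * p <= (p - q) ^+ 2.
  have -> : (p - q) ^+ 2 = (s - t) ^+ 2 * (s + t) ^+ 2 by rewrite -exprMn -subr_sqr ss tt.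
  apply: ler_wpM2l; first exact: sqr_ge0.
  rewrite -ss; rewrite ler_sqr ?nnegrE; lra.
have h2 : (b - a) ^+ 2 * (1 - q) <= (p - q) ^+ 2.
  have -> : (p - q) ^+ 2 = (b - a) ^+ 2 * (b + a) ^+ 2.
    by rewrite -exprMn -subr_sqr aa bb; congr (_ ^+ 2); ring.
  apply: ler_wpM2l; first exact: sqr_ge0.
  rewrite -bb; rewrite ler_sqr ?nnegrE; lra.
rewrite e1.
have hq : 0 <= 1 - q by lra.
have hp : 0 <= p by lra.
have h1' : (s - t) ^+ 2 * p * (1 - q) <= (p - q) ^+ 2 * (1 - q) by apply: ler_wpM2r.
have h2' : (b - a) ^+ 2 * (1 - q) * p <= (p - q) ^+ 2 * p by apply: ler_wpM2r.
have hpq : 0 <= (p - q) ^+ 2 by apply: sqr_ge0.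
have : (p - q) ^+ 2 * (1 - q) + (p - q) ^+ 2 * p <= 2%:R * (p - q) ^+ 2.
  have : (p - q) ^+ 2 * (1 - q + p) <= (p - q) ^+ 2 * 2%:R by apply: ler_wpM2l => //; lra.
  lra.
move=> h3.
rewrite mulrDl !mulrDl in h1' h2' *.
nra.
Qed.

Definition X (R : rcfType) n (e : 'I_n -> 'I_n -> R) (A : 'M[bool]_n) : R :=
  if is_adj A then \prod_(i : 'I_n) \prod_(j : 'I_n | (i < j)%N)
     Num.sqrt (if A i j then e i j else 1 - e i j) else 0.

Lemma X_sq (R : rcfType) n (e : 'I_n -> 'I_n -> R) A :
  (forall i j, 0 <= e i j <= 1) ->
  X e A ^+ 2 = if is_adj A then \prod_(i : 'I_n) \prod_(j : 'I_n | (i < j)%N)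
     (if A i j then e i j else 1 - e i j) else 0.
Proof.
move=> he; rewrite /X; case: (is_adj A); last by rewrite expr0n.
rewrite -prodrXl; apply: eq_bigr => i _; rewrite -prodrXl; apply: eq_bigr => j _.
rewrite sqr_sqrtr //; case: (A i j); have := he i j; lra.
Qed.

Lemma X_sum1 (R : rcfType) n (e : 'I_n -> 'I_n -> R) :
  (forall i j, 0 <= e i j <= 1) -> \sum_A X e A ^+ 2 = 1.
Proof.
move=> he; rewrite (eq_bigr _ (fun A _ => X_sq A he)) (sum_adj (fun i j (b : bool) => if b then e i j else 1 - e i j)) /=.
by apply: big1 => i _; apply: big1 => j _; rewrite addrC subrK.
Qed.

Lemma X_dot (R : rcfType) n (e e' : 'I_n -> 'I_n -> R) :
  \sum_A X e A * X e' A = \prod_(i : 'I_n) \prod_(j : 'I_n | (i < j)%N)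
    (Num.sqrt (e i j) * Num.sqrt (e' i j) + Num.sqrt (1 - e i j) * Num.sqrt (1 - e' i j)).
Proof.
rewrite -(sum_adj (fun i j (b : bool) =>
   Num.sqrt (if b then e i j else 1 - e i j) * Num.sqrt (if b then e' i j else 1 - e' i j))).
apply: eq_bigr => A _; rewrite /X; case: (is_adj A); last by rewrite mul0r.
rewrite -big_split; apply: eq_bigr => i _; rewrite -big_split //.
Qed.

Lemma prod_ge (R : rcfType) (I : Type) (r : seq I) (P : pred I) (F : I -> R) :
  (forall i, P i -> 0 <= F i <= 1) ->
  1 - \sum_(i <- r | P i) (1 - F i) <= \prod_(i <- r | P i) F i.
Proof.
move=> hF; elim: r => [|a r IH]; first by rewrite !big_nil subr0.
rewrite !big_cons; case Pa: (P a) => //.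
have := hF a Pa => /andP[a0 a1].
have s0 : 0 <= \sum_(i <- r | P i) (1 - F i).
  by apply: sumr_ge0 => i Pi; have := hF i Pi; lra.
have p0 : 0 <= \prod_(i <- r | P i) F i.
  by apply: prodr_ge0 => i Pi; have := hF i Pi; lra.
nra.
Qed.

Definition phi (R : rcfType) (a b : R) :=
  Num.sqrt a * Num.sqrt b + Num.sqrt (1 - a) * Num.sqrt (1 - b).

Lemma phi_bnd (R : rcfType) (a b : R) : 0 <= a <= 1 -> 0 <= b <= 1 -> 0 <= phi a b <= 1.
Proof.
move=> ha hb; rewrite /phi.
set s := Num.sqrt a; set t := Num.sqrt b; set x := Num.sqrt (1 - a); set y := Num.sqrt (1 - b).
have s0 : 0 <= s by apply: sqrtr_ge0.
have t0 : 0 <= t by apply: sqrtr_ge0.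
have x0 : 0 <= x by apply: sqrtr_ge0.
have y0 : 0 <= y by apply: sqrtr_ge0.
have ss : s ^+ 2 = a by rewrite sqr_sqrtr //; lra.
have tt : t ^+ 2 = b by rewrite sqr_sqrtr //; lra.
have xx : x ^+ 2 = 1 - a by rewrite sqr_sqrtr //; lra.
have yy : y ^+ 2 = 1 - b by rewrite sqr_sqrtr //; lra.
have h1 : 0 <= (s - t) ^+ 2 by apply: sqr_ge0.
have h2 : 0 <= (x - y) ^+ 2 by apply: sqr_ge0.
rewrite !sqrrB in h1 h2; nra.
Qed.

Lemma phi_same (R : rcfType) (a : R) : 0 <= a <= 1 -> phi a a = 1.
Proof.
move=> ha; rewrite /phi -!expr2 !sqr_sqrtr; lra.
Qed.

Definition rho2 (R : rcfType) (p q : R) := (p - q) ^+ 2 / (p * (1 - q)).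

Lemma phi_pq (R : rcfType) (p q a b : R) : 0 <= q -> q < p -> p <= 1 ->
  (a = p \/ a = q) -> (b = p \/ b = q) -> 1 - phi a b <= rho2 p q.
Proof.
move=> q0 qp p1 ha hb.
have hpos : 0 < p * (1 - q) by apply: mulr_gt0; lra.
have r0 : 0 <= rho2 p q by apply: divr_ge0; [apply: sqr_ge0 | lra].
have key : 1 - phi p q <= rho2 p q.
  by rewrite /rho2 ler_pdivlMr //; exact: edge_ineq.
case: ha => ->; case: hb => ->.
- by rewrite phi_same ?subrr //; lra.
- exact: key.
- by rewrite /phi (mulrC (Num.sqrt q)) (mulrC (Num.sqrt (1 - q))).
- by rewrite phi_same ?subrr //; lra.
Qed.

Lemma sum_ind (R : rcfType) n (u : 'I_n) : \sum_(j : 'I_n) ((j == u)%:R : R) = 1.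
Proof.
by rewrite (bigD1 u) //= eqxx big1 ?addr0 // => j /negbTE ->.
Qed.

Lemma count_sum (R : rcfType) n (u v : 'I_n) (z : 'I_n -> 'I_n -> R) (c : R) :
  0 <= c -> (forall i j, 0 <= z i j) -> (forall i j, z i j <= c) ->
  (forall i j, i != u -> i != v -> j != u -> j != v -> z i j = 0) ->
  \sum_(i : 'I_n) \sum_(j : 'I_n | (i < j)%N) z i j <= c * (4 * n)%:R.
Proof.
move=> c0 z0 zc zz.
pose a (i : 'I_n) : R := (i == u)%:R + (i == v)%:R.
have hw : forall i j, z i j <= c * (a i + a j).
  move=> i j; rewrite /a.
  case: (eqVneq i u) => [->|iu]; first by have := z0 u j; have := zc u j;
    case: (u == v); case: (j == u); case: (j == v); rewrite /=; nra.
  case: (eqVneq i v) => [->|iv]; first by have := z0 v j; have := zc v j;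
    case: (j == u); case: (j == v); rewrite /=; nra.
  case: (eqVneq j u) => [->|ju]; first by have := z0 i u; have := zc i u;
    case: (u == v); rewrite /=; nra.
  case: (eqVneq j v) => [->|jv]; first by have := z0 i v; have := zc i v; rewrite /=; nra.
  by rewrite zz // !mulr0n !addr0 mulr0.
have a0 : forall i, 0 <= a i by move=> i; rewrite /a; apply: addr_ge0; apply: ler0n.
apply: (@le_trans _ _ (\sum_(i : 'I_n) \sum_(j : 'I_n) c * (a i + a j))).
  apply: ler_sum => i _; rewrite [X in _ <= X](bigID (fun j : 'I_n => (i < j)%N)) /=.
  rewrite -[X in X <= _]addr0; apply: lerD; first by apply: ler_sum => j _; exact: hw.
  by apply: sumr_ge0 => j _; apply: mulr_ge0 => //; apply: addr_ge0.
have sa : \sum_(i : 'I_n) a i = 2%:R by rewrite big_split /= !sum_ind.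
under eq_bigr => i _ do rewrite -mulr_sumr.
rewrite -mulr_sumr; apply: ler_wpM2l => //.
rewrite (eq_bigr (fun i : 'I_n => a i *+ n + 2%:R)); last first.
  by move=> i _; rewrite big_split /= sa sumr_const card_ord.
rewrite big_split /= sumrMnl sa sumr_const card_ord.
rewrite -mulrnDl -mulr_natr natrM -[4%N]/(2+2)%N natrD.
by rewrite !mul1r mulr_natr.
Qed.

Unset Implicit Arguments.

Theorem theorem2 (R : rcfType) (kappa b1 b2 : R) :
  0 < kappa -> 0 < b1 -> b1 <= b2 ->
  exists c2 : R, 0 < c2 /\
  exists N : nat, forall (n r K n2 : nat),
    (N <= n)%N ->
    n = (r * K + n2)%N ->
    kappa * n%:R <= K%:R ->
    b1 * (r * K)%:R <= n2%:R -> n2%:R <= b2 * (r * K)%:R ->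
    forall p q : R, 0 <= q -> q < p -> p <= 1 ->
    forall f : 'M[bool]_n -> {set {set 'I_n}},
      (forall sigma : {ffun 'I_n -> option 'I_r},
          gsbm_config K n2 sigma ->
          3%:R / 4%:R <= success_prob sigma p q f) ->
      c2 / Num.sqrt n%:R <= (p - q) / Num.sqrt (p * (1 - q)).
Proof.
move=> kap0 b10 b12.
exists (1 / 6%:R); split; first by lra.
exists 1%N => n r K n2 Hn hn hK hb1 hb2 p q q0 qp p1 f hf.
have nR : 0 < n%:R :> R by rewrite ltr0n.
have K0 : (0 < K)%N.
  by rewrite -(ltr0n R); apply: lt_le_trans hK; apply: mulr_gt0.
have r0 : (0 < r)%N.
  case: (posnP r) => // r0; rewrite r0 mul0n mulr0 lern0 in hb2.
  by move: Hn; rewrite hn r0 (eqP hb2).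
have n20 : (0 < n2)%N.
  rewrite -(ltr0n R); apply: lt_le_trans hb1; apply: mulr_gt0 => //.
  by rewrite ltr0n muln_gt0 r0 K0.
have [sigma [sigma' [u [v [c1 c2 dTC eqs]]]]] := exists_pair K0 r0 n20 hn.
pose e i j := edge_prob sigma p q i j.
pose e' i j := edge_prob sigma' p q i j.
have he : forall i j, 0 <= e i j <= 1 by move=> i j; rewrite /e /edge_prob; case: ifP; lra.
have he' : forall i j, 0 <= e' i j <= 1 by move=> i j; rewrite /e' /edge_prob; case: ifP; lra.
have hs := hf sigma c1; have hs' := hf sigma' c2.
have sp : forall (s : {ffun 'I_n -> option 'I_r}) (es : 'I_n -> 'I_n -> R),
   es = (fun i j => edge_prob s p q i j) -> (forall i j, 0 <= es i j <= 1) ->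
   success_prob s p q f = \sum_(A | f A == true_clusters s) X es A ^+ 2.
  move=> s es -> hes; apply: eq_bigr => A _; rewrite X_sq //.
rewrite (sp sigma e) // in hs; rewrite (sp sigma' e') // in hs'.
have := abstract_ineq (X_sum1 he) (X_sum1 he') _ hs hs'.
move=> /(_ _) ineq.
have {ineq} ineq : 15%:R * \sum_A X e A * X e' A <= 13%:R.
  apply: ineq => A /eqP -> /eqP eq; by rewrite eq eqxx in dTC.
rewrite X_dot in ineq.
have hphi : forall i j, 0 <= phi (e i j) (e' i j) <= 1.
  by move=> i j; apply: phi_bnd.
have lb : 1 - \sum_(i : 'I_n) \sum_(j : 'I_n | (i < j)%N) (1 - phi (e i j) (e' i j))
   <= \prod_(i : 'I_n) \prod_(j : 'I_n | (i < j)%N) phi (e i j) (e' i j).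
  have hF : forall i : 'I_n, xpredT i ->
      0 <= \prod_(j : 'I_n | (i < j)%N) phi (e i j) (e' i j) <= 1.
    move=> i _; apply/andP; split; first by apply: prodr_ge0 => j _; have := hphi i j; lra.
    by apply: prodr_ile1 => j _; apply: hphi.
  have h1 := @prod_ge R 'I_n (index_enum 'I_n) xpredT
    (fun i => \prod_(j : 'I_n | (i < j)%N) phi (e i j) (e' i j)) hF.
  apply: le_trans h1.
  rewrite lerD2l lerN2; apply: ler_sum => i _.
  have := @prod_ge R 'I_n (index_enum 'I_n) (fun j : 'I_n => (i < j)%N)
    (fun j => phi (e i j) (e' i j)) (fun j _ => hphi i j).
  lra.
have r20 : 0 <= rho2 p q.
  by apply: divr_ge0; [apply: sqr_ge0 | apply: mulr_ge0; lra].
have cs := @count_sum R n u v (fun i j => 1 - phi (e i j) (e' i j)) (rho2 p q) r20.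
have {cs} cs : \sum_(i : 'I_n) \sum_(j : 'I_n | (i < j)%N) (1 - phi (e i j) (e' i j))
    <= rho2 p q * (4 * n)%:R.
  apply: cs.
  - by move=> i j; have := hphi i j; lra.
  - move=> i j; apply: phi_pq => //; rewrite /e /e' /edge_prob; case: ifP; auto.
  - move=> i j iu iv ju jv; rewrite /e' /edge_prob !eqs // -/(edge_prob sigma p q i j).
    by rewrite phi_same ?subrr //; apply: he.
rewrite /phi in lb.
have key : 2%:R <= 60%:R * (rho2 p q * n%:R).
  rewrite natrM in cs; lra.
have pq0 : 0 < p * (1 - q) by apply: mulr_gt0; lra.
rewrite -ler_sqr ?nnegrE; last first.
  - by apply: divr_ge0; [lra | apply: sqrtr_ge0].
  - by apply: divr_ge0; [lra | apply: sqrtr_ge0].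
rewrite !expr_div_n !sqr_sqrtr; try lra.
rewrite -/(rho2 p q) ler_pdivrMr //.
nra.
Qed.
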